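(* Let $L$ be a $\kappa$-frame and $I$ a $\kappa$-ideal of $L$. Among the congruences $D\in\mathbb{C}L$ with $\nabla_I\le D$ and $c\ell(D)\le\nabla_I$ there is a largest one, denoted $\partial_I$; it is the congruence corresponding to $\mathfrak{D}_{L/\nabla_I}$ under the correspondence between $\mathbb{C}(L/\nabla_I)$ and congruences on $L$ containing $\nabla_I$, and \[\partial_I=\{(a,b)\in L\times L\mid \text{for all } x\in L:\ a\wedge x\in I \iff b\wedge x\in I\}.\]
   Context: $\kappa$ is a fixed regular cardinal; a $\kappa$-frame is a bounded distributive lattice having joins of all subsets of cardinality $<\kappa$ and satisfying the frame distributive law for such joins. A $\kappa$-ideal is a downset in which every subset of cardinality $<\kappa$ has an upper bound. A congruence is an equivalence relation which is a sub-$\kappa$-frame of $L\times L$; $\mathbb{C}L$ is the frame of congruences under inclusion. $\nabla_a=\{(x,y)\mid x\vee a=y\vee a\}$, $\nabla_I=\bigvee_{a\in I}\nabla_a$. A congruence is closed if it is a join of congruences $\nabla_a$; $c\ell(C)$ is the largest closed congruence contained in $C$. For any $\kappa$-frame $M$, $\mathfrak{D}_M=\{(a,b)\mid \forall x\in M:\ a\wedge x=0\iff b\wedge x=0\}$, which is the largest congruence $D$ on $M$ with $c\ell(D)$ equal to the trivial (diagonal) congruence (Madden). *)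

(* Defs.v *)
From Stdlib Require Import Classical.
Set Implicit Arguments.

(** Cardinals are represented by types: the cardinal kappa is |K| for a type K. *)
Definition injective {A B : Type} (f : A -> B) : Prop :=
  forall x y, f x = f y -> x = y.

Definition lt_card (T K : Type) : Prop :=
  (exists f : T -> K, injective f) /\ ~ (exists g : K -> T, injective g).

Definition regular_card (K : Type) : Prop :=
  (exists f : nat -> K, injective f) /\
  (forall (I : Type) (F : I -> Type),
      lt_card I K -> (forall i, lt_card (F i) K) -> lt_card {i : I & F i} K).

Definition small (K : Type) {T : Type} (S : T -> Prop) : Prop :=
  lt_card {x : T | S x} K.

Definition is_lub {T : Type} (le : T -> T -> Prop) (S : T -> Prop) (s : T) : Prop :=
  (forall x, S x -> le x s) /\ (forall u, (forall x, S x -> le x u) -> le s u).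

Record kFrame (K : Type) : Type := {
  kcar :> Type;
  kle : kcar -> kcar -> Prop;
  kle_refl : forall x, kle x x;
  kle_trans : forall x y z, kle x y -> kle y z -> kle x z;
  kle_antisym : forall x y, kle x y -> kle y x -> x = y;
  kbot : kcar;
  ktop : kcar;
  kmeet : kcar -> kcar -> kcar;
  kjoin : kcar -> kcar -> kcar;
  kbot_least : forall x, kle kbot x;
  ktop_greatest : forall x, kle x ktop;
  kmeet_glb : forall x y z, kle z (kmeet x y) <-> (kle z x /\ kle z y);
  kjoin_lub : forall x y z, kle (kjoin x y) z <-> (kle x z /\ kle y z);
  kdistr : forall x y z, kmeet x (kjoin y z) = kjoin (kmeet x y) (kmeet x z);
  ksup_ex : forall S : kcar -> Prop, small K S -> exists s, is_lub kle S s;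
  kframe_distr : forall (S : kcar -> Prop) (s a : kcar), small K S -> is_lub kle S s ->
      is_lub kle (fun y => exists x, S x /\ y = kmeet a x) (kmeet a s)
}.

Arguments kle {K} _ _ _.
Arguments kbot {K} _.
Arguments ktop {K} _.
Arguments kmeet {K} _ _ _.
Arguments kjoin {K} _ _ _.

Section KFrameDefs.
Context {K : Type} (L : kFrame K).

Definition rel := L -> L -> Prop.

Definition incl (C D : rel) : Prop := forall x y, C x y -> D x y.
Definition releq (C D : rel) : Prop := forall x y, C x y <-> D x y.

Definition kideal (I : L -> Prop) : Prop :=
  (forall x y, kle L x y -> I y -> I x) /\
  (forall S : L -> Prop, small K S -> (forall x, S x -> I x) ->
      exists u, I u /\ forall x, S x -> kle L x u).

(** Congruence: an equivalence relation which is a sub-kappa-frame of L x L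
    (operations of L x L are componentwise). *)
Definition congruence (C : rel) : Prop :=
  (forall x, C x x) /\
  (forall x y, C x y -> C y x) /\
  (forall x y z, C x y -> C y z -> C x z) /\
  C (kbot L) (kbot L) /\ C (ktop L) (ktop L) /\
  (forall a b c d, C a b -> C c d -> C (kmeet L a c) (kmeet L b d)) /\
  (forall a b c d, C a b -> C c d -> C (kjoin L a c) (kjoin L b d)) /\
  (forall (S : L * L -> Prop), small K S -> (forall p, S p -> C (fst p) (snd p)) ->
     forall u v,
       is_lub (kle L) (fun y => exists p, S p /\ y = fst p) u ->
       is_lub (kle L) (fun y => exists p, S p /\ y = snd p) v ->
       C u v).

Definition cong_join {J : Type} (F : J -> rel) : rel :=
  fun x y => forall C, congruence C -> (forall j, incl (F j) C) -> C x y.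

Definition nabla (a : L) : rel := fun x y => kjoin L x a = kjoin L y a.

Definition nablaI (I : L -> Prop) : rel :=
  cong_join (fun a : {a : L | I a} => nabla (proj1_sig a)).

Definition closed (C : rel) : Prop :=
  exists S : L -> Prop, releq C (cong_join (fun a : {a : L | S a} => nabla (proj1_sig a))).

Definition cl (C : rel) : rel :=
  cong_join (fun D : {D : rel | closed D /\ incl D C} => proj1_sig D).

(** The congruence on L corresponding, under CC(L/theta) ~ {congruences >= theta},
    to frak-D of the quotient L/theta.  In L/theta: [a] /\ [x] = [a /\ x],
    0 = [0], and [y] = [z] iff theta y z; so ([a],[b]) in frak-D_{L/theta} iff
    for all x in L, (theta (a/\x) 0 <-> theta (b/\x) 0). *)
Definition frakD_quot (theta : rel) : rel :=
  fun a b => forall x : L,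
    theta (kmeet L a x) (kbot L) <-> theta (kmeet L b x) (kbot L).

End KFrameDefs.

(* Main.v *)
Require Import Defs.
From Stdlib Require Import Classical.
From Stdlib Require Import ClassicalEpsilon Setoid.

Section Aux.
Variable K : Type.

Lemma lt_card_inj (A B : Type) (h : B -> A) : injective h -> lt_card A K -> lt_card B K.
Proof.
  intros hi [[f fi] nK]. split.
  - exists (fun b => f (h b)). intros x y e. apply hi, fi, e.
  - intros [g gi]. apply nK. exists (fun k => h (g k)). intros x y e. apply gi, hi, e.
Qed.

Lemma image_small (A B : Type) (f : A -> B) :
  lt_card A K -> small K (fun y => exists q : A, y = f q).
Proof.
  intros H. unfold small.
  apply (@lt_card_inj _ _ (fun s : {y | exists q : A, y = f q} => proj1_sig (constructive_indefinite_description _ (proj2_sig s)))); auto.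
  intros [x px] [y py]; simpl.
  destruct (constructive_indefinite_description _ px) as [q hq].
  destruct (constructive_indefinite_description _ py) as [r hr]. simpl. intros e; subst.
  rewrite (proof_irrelevance _ px py). reflexivity.
Qed.

Lemma small_ext (T : Type) (P Q : T -> Prop) : (forall x, Q x -> P x) -> small K P -> small K Q.
Proof.
  intros H. unfold small.
  apply (@lt_card_inj _ _ (fun s : {x | Q x} => exist P (proj1_sig s) (H _ (proj2_sig s)))).
  intros [x px] [y py]; simpl. intros e. injection e. intros; subst.
  rewrite (proof_irrelevance _ px py). reflexivity.
Qed.

Lemma image_small_set (A B : Type) (S : A -> Prop) (f : A -> B) :
  small K S -> small K (fun y => exists z, S z /\ y = f z).
Proof.
  intros H.
  apply (@small_ext _ (fun y => exists q : {z | S z}, y = f (proj1_sig q))).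
  - intros y [z [sz e]]. exists (exist _ z sz). auto.
  - apply image_small. exact H.
Qed.

Lemma lt_card_bool : regular_card K -> lt_card bool K.
Proof.
  intros [[f fi] _]. split.
  - exists (fun b : bool => if b then f 0 else f 1). intros [] [] e; auto; apply fi in e; discriminate.
  - intros [g gi].
    assert (Hij : forall i j, g (f i) = g (f j) -> i = j) by (intros i j e; apply fi, gi, e).
    destruct (g (f 0)) eqn:E0, (g (f 1)) eqn:E1, (g (f 2)) eqn:E2;
    first [ discriminate (Hij 0 1 ltac:(congruence)) | discriminate (Hij 0 2 ltac:(congruence))
          | discriminate (Hij 1 2 ltac:(congruence)) ].
Qed.

Lemma small_pair (T : Type) (a b : T) : regular_card K -> small K (fun x => x = a \/ x = b).
Proof.
  intros hK. unfold small.
  apply (@lt_card_inj _ _ (fun s : {x | x = a \/ x = b} =>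
     if excluded_middle_informative (proj1_sig s = a) then true else false));
  [| apply lt_card_bool; exact hK].
  intros [x px] [y py]; simpl.
  destruct (excluded_middle_informative (x = a)) as [ex|ex], (excluded_middle_informative (y = a)) as [ey|ey];
    intro Heq; try discriminate.
  - subst. rewrite (proof_irrelevance _ px py). reflexivity.
  - assert (x = y) by (destruct px; destruct py; congruence). subst.
    rewrite (proof_irrelevance _ px py). reflexivity.
Qed.

End Aux.
Arguments image_small_set {K A B S} f _.
Arguments small_pair {K T} a b _.
Arguments small_ext {K T P Q} _ _.

Section Frame.
Variable K : Type.
Variable L : kFrame K.
Notation le := (kle L).
Notation meet := (kmeet L).
Notation join := (kjoin L).
Notation bot := (kbot L).
Notation top := (ktop L).

Lemma meet_l x y : le (meet x y) x.
Proof. exact (proj1 (proj1 (kmeet_glb L x y (meet x y)) (kle_refl L _))). Qed.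
Lemma meet_r x y : le (meet x y) y.
Proof. exact (proj2 (proj1 (kmeet_glb L x y (meet x y)) (kle_refl L _))). Qed.
Lemma meet_i x y z : le z x -> le z y -> le z (meet x y).
Proof. intros; apply (proj2 (kmeet_glb L x y z)); auto. Qed.
Lemma join_l x y : le x (join x y).
Proof. exact (proj1 (proj1 (kjoin_lub L x y (join x y)) (kle_refl L _))). Qed.
Lemma join_r x y : le y (join x y).
Proof. exact (proj2 (proj1 (kjoin_lub L x y (join x y)) (kle_refl L _))). Qed.
Lemma join_i x y z : le x z -> le y z -> le (join x y) z.
Proof. intros; apply (proj2 (kjoin_lub L x y z)); auto. Qed.

Hint Resolve meet_l meet_r join_l join_r meet_i join_i kle_refl kbot_least ktop_greatest : lat.
Ltac lat := repeat (apply meet_i || apply join_i);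
  eauto 6 using kle_trans, meet_l, meet_r, join_l, join_r, kle_refl.
Ltac antis := apply (kle_antisym L); lat.

Lemma meet_comm x y : meet x y = meet y x. Proof. antis. Qed.
Lemma meet_assoc x y z : meet x (meet y z) = meet (meet x y) z. Proof. antis. Qed.
Lemma join_comm x y : join x y = join y x. Proof. antis. Qed.
Lemma join_assoc x y z : join x (join y z) = join (join x y) z. Proof. antis. Qed.
Lemma le_join x y : le x y -> join x y = y. Proof. intros; antis. Qed.
Arguments le_join {x y} _.
Lemma bot_join x : join bot x = x. Proof. apply le_join, kbot_least. Qed.
Lemma join_bot x : join x bot = x. Proof. rewrite join_comm; apply bot_join. Qed.
Lemma join_idem x : join x x = x. Proof. apply le_join, kle_refl. Qed.
Lemma meet_top x : meet x top = x. Proof. antis. apply ktop_greatest. Qed.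
Lemma meet_swap a b c : meet a (meet b c) = meet b (meet a c). Proof. antis. Qed.
Lemma join_mono a b c d : le a b -> le c d -> le (join a c) (join b d). Proof. intros; lat. Qed.
Lemma meet_mono a b c d : le a b -> le c d -> le (meet a c) (meet b d). Proof. intros; lat. Qed.

Lemma distr2 x z u : join (meet x z) u = meet (join x u) (join z u).
Proof.
  rewrite (kdistr L (join x u) z u).
  rewrite (meet_comm (join x u) z), (kdistr L z x u).
  assert (E : meet (join x u) u = u) by antis. rewrite E.
  rewrite (meet_comm z x). antis.
Qed.

Lemma jjd a c u : join (join a c) u = join (join a u) (join c u).
Proof. antis. Qed.

Lemma N_up x y a u : join x a = join y a -> le a u -> join x u = join y u.
Proof.
  intros e h.
  assert (E1 : join x u = join (join x a) u) by (rewrite <- join_assoc, (le_join h); reflexivity).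
  assert (E2 : join y u = join (join y a) u) by (rewrite <- join_assoc, (le_join h); reflexivity).
  rewrite E1, E2, e. reflexivity.
Qed.

Arguments N_up {x y a u} _ _.
Variable hK : regular_card K.
Variable I : L -> Prop.
Variable hI : kideal L I.

Lemma I_down x y : le x y -> I y -> I x.
Proof. exact (proj1 hI x y). Qed.

Arguments I_down {x y} _ _.
Lemma I_ub2 a b : I a -> I b -> exists u, I u /\ le a u /\ le b u.
Proof.
  intros ha hb.
  destruct (proj2 hI (fun x => x = a \/ x = b) (small_pair a b hK)) as [u [hu hle]].
  - intros x [-> | ->]; auto.
  - exists u. split; [auto | split; apply hle; auto].
Qed.

Arguments I_ub2 {a b} _ _.
Lemma I_join a b : I a -> I b -> I (join a b).
Proof.
  intros ha hb. destruct (I_ub2 ha hb) as [u [hu [h1 h2]]].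
  apply (@I_down _ u); lat.
Qed.

Lemma I_join_iff a b : I (join a b) <-> I a /\ I b.
Proof.
  split.
  - intros h; split; apply (@I_down _ (join a b)); lat.
  - intros [h1 h2]; apply I_join; auto.
Qed.

Lemma I_bot : I bot.
Proof.
  destruct (proj2 hI (fun _ => False)
              (small_ext (fun x (f : False) => or_introl (B := x = bot) (match f with end))
                 (small_pair bot bot hK))) as [u [hu _]].
  - intros x [].
  - apply (I_down (kbot_least L u) hu).
Qed.

Lemma I_lub (T : L -> Prop) s : small K T -> is_lub le T s -> (I s <-> forall y, T y -> I y).
Proof.
  intros hT [h1 h2]. split.
  - intros hs y ty. apply (I_down (h1 y ty) hs).
  - intros H. destruct (proj2 hI T hT H) as [w [hw hw2]].
    apply (I_down (h2 w hw2) hw).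
Qed.

Arguments I_lub {T s} _ _.
Definition Nrel (x y : L) : Prop := exists a, I a /\ join x a = join y a.

Lemma N_cong : congruence Nrel.
Proof.
  unfold congruence.
  refine (conj _ (conj _ (conj _ (conj _ (conj _ (conj _ (conj _ _))))))).
  - intro x; exists bot; split; [apply I_bot | reflexivity].
  - intros x y [a [ha e]]; exists a; auto.
  - intros x y z [a [ha e1]] [b [hb e2]].
    destruct (I_ub2 ha hb) as [u [hu [hau hbu]]].
    exists u; split; auto. rewrite (N_up e1 hau). apply (N_up e2 hbu).
  - exists bot; split; [apply I_bot | reflexivity].
  - exists bot; split; [apply I_bot | reflexivity].
  - intros a b c d [p [hp e1]] [q [hq e2]].
    destruct (I_ub2 hp hq) as [u [hu [h1 h2]]].
    exists u; split; auto. rewrite (distr2 a c u), (distr2 b d u), (N_up e1 h1), (N_up e2 h2). reflexivity.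
  - intros a b c d [p [hp e1]] [q [hq e2]].
    destruct (I_ub2 hp hq) as [u [hu [h1 h2]]].
    exists u; split; auto. rewrite (jjd a c u), (jjd b d u), (N_up e1 h1), (N_up e2 h2). reflexivity.
  - intros S hS HS u v hu hv.
    set (g := fun p : L * L => epsilon (inhabits bot)
                 (fun a => I a /\ join (fst p) a = join (snd p) a)).
    assert (Hg : forall p, S p -> I (g p) /\ join (fst p) (g p) = join (snd p) (g p)).
    { intros p sp. apply (epsilon_spec (inhabits bot) (fun a => I a /\ join (fst p) a = join (snd p) a)).
      apply HS; auto. }
    destruct (proj2 hI (fun a => exists p, S p /\ a = g p) (image_small_set g hS))
      as [w [hw hw2]].
    + intros a [p [sp ->]]. apply Hg; auto.
    + assert (Hp : forall p, S p -> join (fst p) w = join (snd p) w).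
      { intros p sp. destruct (Hg p sp) as [_ e]. apply (N_up e). apply hw2. eauto. }
      exists w; split; auto.
      apply (kle_antisym L); apply join_i; try apply join_r.
      * apply (proj2 hu). intros y [p [sp ->]].
        apply (kle_trans L _ (join (fst p) w)); [apply join_l|].
        rewrite (Hp p sp). apply join_mono; [apply (proj1 hv); eauto | apply kle_refl].
      * apply (proj2 hv). intros y [p [sp ->]].
        apply (kle_trans L _ (join (snd p) w)); [apply join_l|].
        rewrite <- (Hp p sp). apply join_mono; [apply (proj1 hu); eauto | apply kle_refl].
Qed.

Lemma nablaI_iff x y : nablaI L I x y <-> Nrel x y.
Proof.
  split.
  - intros H. apply H. exact N_cong. intros [a ha] u v e. simpl in e. unfold nabla in e.
    exists a; split; auto.
  - intros [a [ha e]] C HC HF.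
    destruct HC as [Cr [Cs [Ct _]]].
    assert (Hx : forall z, C z (join z a)).
    { intro z. apply (HF (exist _ a ha)). unfold nabla; simpl.
      rewrite <- join_assoc, join_idem. reflexivity. }
    apply (Ct _ _ _ (Hx x)). rewrite e. apply Cs, Hx.
Qed.

Lemma N_bot y : Nrel y bot <-> I y.
Proof.
  split.
  - intros [a [ha e]]. rewrite bot_join in e. apply (@I_down _ a); auto.
    rewrite <- e. apply join_l.
  - intros h. exists y; split; auto. rewrite join_idem, bot_join. reflexivity.
Qed.

Definition Prel (a b : L) : Prop := forall x, I (meet a x) <-> I (meet b x).

Lemma P_key a c x : I (meet (join a c) x) <-> I (meet a x) /\ I (meet c x).
Proof.
  rewrite meet_comm, kdistr, I_join_iff, (meet_comm x a), (meet_comm x c). reflexivity.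
Qed.

Lemma lub_key (S' : L -> Prop) s x : small K S' -> is_lub le S' s ->
  (I (meet s x) <-> forall y, S' y -> I (meet y x)).
Proof.
  intros hs hl. rewrite meet_comm.
  rewrite (I_lub (image_small_set (meet x) hs) (kframe_distr L x hs hl)).
  split.
  - intros H y sy. rewrite meet_comm. apply H. eauto.
  - intros H y [z [sz ->]]. rewrite meet_comm. auto.
Qed.

Arguments lub_key {S' s} x _ _.
Lemma P_cong : congruence Prel.
Proof.
  unfold congruence, Prel.
  refine (conj _ (conj _ (conj _ (conj _ (conj _ (conj _ (conj _ _))))))).
  - intros; reflexivity.
  - intros x y H z; rewrite H; reflexivity.
  - intros x y z H1 H2 w; rewrite H1, H2; reflexivity.
  - intros; reflexivity.
  - intros; reflexivity.
  - intros a b c d H1 H2 x. rewrite <- !meet_assoc.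
    rewrite (H1 (meet c x)), (meet_swap b c), (H2 (meet b x)), (meet_swap d b). reflexivity.
  - intros a b c d H1 H2 x. rewrite !P_key, H1, H2. reflexivity.
  - intros S hS HS u v hu hv x.
    rewrite (lub_key x (image_small_set fst hS) hu), (lub_key x (image_small_set snd hS) hv).
    split.
    + intros H y [p [sp ->]]. apply (HS p sp). apply H. eauto.
    + intros H y [p [sp ->]]. apply (HS p sp). apply H. eauto.
Qed.

Lemma N_sub_P x y : Nrel x y -> Prel x y.
Proof.
  assert (half : forall x y a z, join x a = join y a -> I a -> I (meet x z) -> I (meet y z)).
  { intros x' y' a z e ha h.
    apply (@I_down _ (meet (join y' a) z)); [apply meet_mono; [apply join_l | apply kle_refl]|].
    rewrite <- e, meet_comm, kdistr. apply I_join.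
    - rewrite meet_comm; auto.
    - apply (@I_down _ a); auto. apply meet_r. }
  intros [a [ha e]] z. split; intro h; eapply half; eauto.
Qed.

Lemma main_sec :
  exists partialI : rel L,
    (congruence partialI /\ incl (nablaI L I) partialI /\ incl (cl partialI) (nablaI L I) /\
     (forall D : rel L, congruence D -> incl (nablaI L I) D -> incl (cl D) (nablaI L I) ->
        incl D partialI)) /\
    releq partialI (frakD_quot (nablaI L I)) /\
    releq partialI (fun a b => forall x : L, I (kmeet L a x) <-> I (kmeet L b x)).
Proof.
  exists Prel. split; [split; [exact P_cong | split; [| split]] | split].
  - intros x y H. apply N_sub_P. apply (proj1 (nablaI_iff x y)). exact H.
  - intros x y H. apply nablaI_iff. unfold cl, cong_join in H. apply H. exact N_cong.
    intros [D [[S hS] hDP]] a b hD; simpl in *.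
    apply hS in hD. apply hD. exact N_cong.
    intros [c hc] y0 z0 e. simpl in e. unfold nabla in e.
    assert (Ic : I c).
    { assert (Pc : Prel c bot).
      { apply hDP. apply hS. intros C _ HF. apply (HF (exist _ c hc)). simpl. unfold nabla.
        rewrite join_idem, bot_join. reflexivity. }
      specialize (Pc top). rewrite !meet_top in Pc. apply Pc, I_bot. }
    exists c; split; auto.
  - intros D HD HN Hcl.
    pose proof HD as HD0; destruct HD as [Dr [Ds [Dt [_ [_ [Dm [Dj _]]]]]]].
    assert (half : forall a b x, D a b -> I (meet a x) -> I (meet b x)).
    { intros a b x Dab h.
      set (c := meet b x).
      assert (Dcb : D c bot).
      { apply (Dt _ (meet a x)). apply Ds, Dm; auto.
        apply HN, nablaI_iff, N_bot; auto. }
      set (D' := cong_join (fun j : {j : L | j = c} => nabla L (proj1_sig j))).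
      assert (D'c : D' c bot).
      { intros C _ HF. apply (HF (exist _ c eq_refl)). simpl. unfold nabla.
        rewrite join_idem, bot_join. reflexivity. }
      assert (Hc : cl D c bot).
      { unfold cl, cong_join. intros C HC HF.
        refine (HF (exist _ D' (conj _ _)) c bot D'c).
        - exists (fun j => j = c). intros y z. reflexivity.
        - intros y z hy. apply hy.
          + exact HD0.
          + intros [j hj] u w e; simpl in *. subst j. unfold nabla in e.
            assert (Hu : forall t, D t (join t c)).
            { intro t. rewrite <- (join_bot t) at 1. apply Dj; auto. }
            apply (Dt _ _ _ (Hu u)). rewrite e. apply Ds, Hu. }
      apply Hcl in Hc. apply (proj1 (nablaI_iff c bot)) in Hc. apply (proj1 (N_bot c)) in Hc. exact Hc. }
    intros a b Dab x. split; apply half; auto.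
  - intros a b. unfold frakD_quot. split; intros H x.
    + rewrite !nablaI_iff, !N_bot. apply H.
    + specialize (H x). rewrite !nablaI_iff, !N_bot in H. exact H.
  - intros a b. reflexivity.
Qed.

End Frame.

Theorem mainTheorem6 (K : Type) (hK : regular_card K) (L : kFrame K)
  (I : L -> Prop) (hI : kideal L I) :
  exists partialI : rel L,
    (* partial_I is the largest congruence D with nabla_I <= D and cl(D) <= nabla_I *)
    (congruence partialI /\ incl (nablaI L I) partialI /\ incl (cl partialI) (nablaI L I) /\
     (forall D : rel L, congruence D -> incl (nablaI L I) D -> incl (cl D) (nablaI L I) ->
        incl D partialI)) /\
    (* it corresponds to frak-D of L / nabla_I *)
    releq partialI (frakD_quot (nablaI L I)) /\
    (* explicit description *)
    releq partialI (fun a b => forall x : L, I (kmeet L a x) <-> I (kmeet L b x)).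
Proof.
  exact (@main_sec K L hK I hI).
Qed.
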